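(* Let $M\ge3$ be an integer and $p\in[2,\infty]$. For every continuous $M$-linear form $T:X_p\times X_\infty\times\cdots\times X_\infty\to\mathbb{R}$, \[ \left(\sum_{i_1=1}^\infty\left(\sum_{i_2,\dots,i_M=1}^\infty|T(e_{i_1},\dots,e_{i_M})|^2\right)^{\frac12\cdot\frac{p}{p-1}}\right)^{\frac{p-1}{p}}\le\left(\mathrm{A}_{\frac{p}{p-1}}\right)^{M-1}\|T\|. \] Hence the optimal constant $C_{(M),p}$ satisfies $C_{(M),p}\le(\mathrm{A}_{p/(p-1)})^{M-1}$.
   Context: Scalars are real. $X_p=\ell_p$ for $1\le p<\infty$, $X_\infty=c_0$, $(e_k)$ canonical unit vectors. For a continuous $M$-linear form $T:X_{p_1}\times\cdots\times X_{p_M}\to\mathbb{R}$, $\|T\|=\sup\{|T(x^{(1)},\dots,x^{(M)})|:\|x^{(k)}\|_{X_{p_k}}\le1\}$. $p/(p-1)$ is read as $1$ when $p=\infty$. $r_j(t)=\operatorname{sign}(\sin(2^j\pi t))$ are the Rademacher functions, and for $0<r<\infty$, $\mathrm{A}_r$ is the optimal constant such that $\left(\sum_{j=1}^n|a_j|^2\right)^{1/2}\le \mathrm{A}_r\left(\int_0^1|\sum_{j=1}^n a_jr_j(t)|^rdt\right)^{1/r}$ for all $n$ and real $a_j$. $C_{(M),p}$ denotes the optimal constant $C$ in the displayed inequality (with $C$ in place of $(\mathrm{A}_{p/(p-1)})^{M-1}$) over all such $T$. *)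

(* Defs.v *)
From Stdlib Require Import Reals Lra Lia.
Open Scope R_scope.

(** Nonnegative real power: [rpow x r = x^r] for [x > 0], and [0] for [x <= 0]
    (used only with [x >= 0] and [r > 0], where [0^r = 0]). *)
Definition rpow (x r : R) : R :=
  if Rlt_dec 0 x then Rpower x r else 0.

Fixpoint fsum (n : nat) (f : nat -> R) : R :=
  match n with O => 0 | S m => fsum m f + f m end.

(** Exponents p in [1, oo]: [Fin p] or [Inf]. *)
Inductive Exp := Fin (p : R) | Inf.

Definition conj_exp (e : Exp) : R :=
  match e with Fin p => p / (p - 1) | Inf => 1 end.

(** X_p = l_p (p finite), X_oo = c_0; sequences are [nat -> R]
    (index 0 corresponds to the paper's index 1). *)
Definition inX (e : Exp) (x : nat -> R) : Prop :=
  match e with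
  | Fin p => exists S, infinite_sum (fun i => rpow (Rabs (x i)) p) S
  | Inf => Un_cv x 0
  end.

Definition inBall (e : Exp) (x : nat -> R) : Prop :=
  match e with
  | Fin p => exists S, infinite_sum (fun i => rpow (Rabs (x i)) p) S
                       /\ rpow S (/ p) <= 1
  | Inf => Un_cv x 0 /\ forall i, Rabs (x i) <= 1
  end.

Definition evec (i : nat) : nat -> R := fun j => if Nat.eq_dec i j then 1 else 0.

Definition slot (e : Exp) (k : nat) : Exp :=
  match k with O => e | S _ => Inf end.

(** An M-linear form is modelled as T : (nat -> (nat -> R)) -> R, where
    x k is the k-th argument (only k < M is relevant). *)
Definition upd (x : nat -> nat -> R) (k : nat) (v : nat -> R) : nat -> nat -> R :=
  fun j => if Nat.eq_dec j k then v else x j.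

Definition depends_on_first (M : nat) (T : (nat -> nat -> R) -> R) : Prop :=
  forall x y, (forall k, (k < M)%nat -> x k = y k) -> T x = T y.

Definition is_multilinear (M : nat) (e : Exp) (T : (nat -> nat -> R) -> R) : Prop :=
  forall (x : nat -> nat -> R) (k : nat) (y : nat -> R) (a : R),
    (k < M)%nat ->
    (forall j, (j < M)%nat -> inX (slot e j) (x j)) ->
    inX (slot e k) y ->
    T (upd x k (fun i => a * x k i + y i)) = a * T x + T (upd x k y).

(** The set { |T(x^(1),...,x^(M))| : ||x^(k)|| <= 1 }; its lub is ||T||
    (its existence expresses continuity = boundedness). *)
Definition norm_set (M : nat) (e : Exp) (T : (nat -> nat -> R) -> R) (v : R) : Prop :=
  exists x : nat -> nat -> R,
    (forall k, (k < M)%nat -> inBall (slot e k) (x k)) /\ v = Rabs (T x).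

Definition sgn (x : R) : R :=
  if Rlt_dec 0 x then 1 else if Rlt_dec x 0 then -1 else 0.
Definition rad (j : nat) (t : R) : R := sgn (sin (2 ^ j * PI * t)).

(** C is an admissible constant in Khinchin's inequality with exponent r:
    for all n and a_1..a_n (here a (S j), j < n),
    (sum |a_j|^2)^(1/2) <= C (int_0^1 |sum a_j r_j(t)|^r dt)^(1/r). *)
Definition khin_adm (r C : R) : Prop :=
  forall (n : nat) (a : nat -> R),
    exists pr : Riemann_integrable
                  (fun t => rpow (Rabs (fsum n (fun j => a (S j) * rad (S j) t))) r) 0 1,
      sqrt (fsum n (fun j => Rsqr (Rabs (a (S j)))))
        <= C * rpow (RiemannInt pr) (/ r).

Definition is_khinchin_const (r A : R) : Prop :=
  (forall C, khin_adm r C -> A <= C) /\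
  (forall B, (forall C, khin_adm r C -> B <= C) -> B <= A).

(** Sum of g(idx) over idx with idx k < n for k < d (idx k = 0 for k >= d). *)
Fixpoint multi_sum (d n : nat) (g : (nat -> nat) -> R) : R :=
  match d with
  | O => g (fun _ => O)
  | S d' => fsum n (fun i =>
              multi_sum d' n (fun idx => g (fun k => match k with O => i | S k' => idx k' end)))
  end.

(** Truncation at indices < n of the left-hand side of the inequality:
    ( sum_{i1} ( sum_{i2..iM} |T(e_i1,...,e_iM)|^2 )^{q/2} )^{1/q}, q = conj_exp e. *)
Definition lhs_trunc (M : nat) (e : Exp) (T : (nat -> nat -> R) -> R) (n : nat) : R :=
  let q := conj_exp e in
  rpow (fsum n (fun i1 =>
          rpow (multi_sum (M - 1) n (fun idx =>
                  Rsqr (Rabs (T (fun k => match k with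
                                          | O => evec i1
                                          | S k' => evec (idx k') end)))))
               (q / 2)))
       (/ q).

Definition exp_ge2 (e : Exp) : Prop :=
  match e with Fin p => 2 <= p | Inf => True end.

(* Main.v *)
Require Import Defs.
From Stdlib Require Import Reals Lra Lia Psatz FunctionalExtensionality Classical.
Open Scope R_scope.

Lemma Rpower_pos x r : 0 < Rpower x r.
Proof. unfold Rpower; apply exp_pos. Qed.

Lemma rpow_ge0 x r : 0 <= rpow x r.
Proof. unfold rpow; destruct (Rlt_dec 0 x); [left; apply Rpower_pos|lra]. Qed.

Lemma rpow_0 r : rpow 0 r = 0.
Proof. unfold rpow; destruct (Rlt_dec 0 0); lra. Qed.

Lemma rpow_posE x r : 0 < x -> rpow x r = Rpower x r.
Proof. intros; unfold rpow; destruct (Rlt_dec 0 x); [auto|lra]. Qed.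

Lemma rpow_gt0 x r : 0 < x -> 0 < rpow x r.
Proof. intros; rewrite rpow_posE; auto; apply Rpower_pos. Qed.

Lemma rpow_1 x : 0 <= x -> rpow x 1 = x.
Proof. intros [H|H]; [rewrite rpow_posE; auto; apply Rpower_1; auto|subst; apply rpow_0]. Qed.

Lemma rpow_mult x a b : 0 <= x -> rpow (rpow x a) b = rpow x (a*b).
Proof.
  intros [H|H].
  - rewrite (rpow_posE x a H), (rpow_posE x); auto. rewrite rpow_posE; [|apply Rpower_pos].
    apply Rpower_mult.
  - subst; rewrite !rpow_0; auto.
Qed.

Lemma rpow_mul x y r : 0 <= x -> 0 <= y -> rpow (x*y) r = rpow x r * rpow y r.
Proof.
  intros [H|H] [H'|H'].
  - rewrite !rpow_posE; auto; [|nra]. symmetry; apply Rpower_mult_distr; auto.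
  - subst; rewrite Rmult_0_r, !rpow_0; ring.
  - subst; rewrite Rmult_0_l, !rpow_0; ring.
  - subst; rewrite Rmult_0_l, !rpow_0; ring.
Qed.

Lemma rpow_le x y r : 0 <= x <= y -> 0 <= r -> rpow x r <= rpow y r.
Proof.
  intros [[H|H] Hxy] Hr.
  - rewrite !rpow_posE; try lra. apply Rle_Rpower_l; lra.
  - subst; rewrite rpow_0; apply rpow_ge0.
Qed.

Lemma rpow_lt x y r : 0 <= x < y -> 0 < r -> rpow x r < rpow y r.
Proof.
  intros [[H|H] Hxy] Hr.
  - rewrite !rpow_posE; try lra. apply Rlt_Rpower_l; lra.
  - subst; rewrite rpow_0; apply rpow_gt0; lra.
Qed.

Lemma rpow_plus x a b : 0 < x -> rpow x (a+b) = rpow x a * rpow x b.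
Proof. intros; rewrite !rpow_posE; auto; apply Rpower_plus. Qed.

Lemma rpow_sqrt x : 0 <= x -> rpow x (/2) = sqrt x.
Proof.
  intros [H|H]; [rewrite rpow_posE; auto; apply Rpower_sqrt; auto|subst; rewrite rpow_0, sqrt_0; auto].
Qed.

Lemma rpow_inv x r : 0 < x -> rpow (/x) r = / rpow x r.
Proof.
  intros H. assert (Hi: 0 < /x) by (apply Rinv_0_lt_compat; auto).
  assert (E: rpow (/x) r * rpow x r = 1).
  { rewrite <- rpow_mul by lra. rewrite Rinv_l by lra. rewrite rpow_posE by lra.
    unfold Rpower; rewrite ln_1, Rmult_0_r; apply exp_0. }
  assert (0 < rpow x r) by (apply rpow_gt0; auto).
  field_simplify_eq; [lra|lra].
Qed.

Lemma rpow_div x y r : 0 <= x -> 0 < y -> rpow (x / y) r = rpow x r / rpow y r.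
Proof.
  intros. unfold Rdiv. rewrite rpow_mul; [|lra|left; apply Rinv_0_lt_compat; auto].
  rewrite rpow_inv; auto.
Qed.

Lemma rpow_id x r : 0 <= x -> r <> 0 -> rpow (rpow x r) (/ r) = x.
Proof. intros; rewrite rpow_mult; auto. rewrite Rinv_r; auto. apply rpow_1; auto. Qed.

Lemma rpow_le_inv x y r : 0 <= x -> 0 < r -> rpow x r <= y -> x <= rpow y (/r).
Proof.
  intros Hx Hr H. rewrite <- (rpow_id x r) by lra. apply rpow_le.
  split; [apply rpow_ge0|auto]. left; apply Rinv_0_lt_compat; auto.
Qed.

Lemma rpow_zero_inv x r : 0 <= x -> rpow x r = 0 -> x = 0.
Proof. intros [H|H] E; auto. pose proof (rpow_gt0 x r H); lra. Qed.

Lemma rpow_0_r x : 0 < x -> rpow x 0 = 1.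
Proof. intros; rewrite rpow_posE; auto; apply Rpower_O; auto. Qed.

Lemma rpow_one r : rpow 1 r = 1.
Proof. rewrite rpow_posE by lra. unfold Rpower; rewrite ln_1, Rmult_0_r; apply exp_0. Qed.

Lemma fsum_ext n f g : (forall i, (i < n)%nat -> f i = g i) -> fsum n f = fsum n g.
Proof. induction n; simpl; intros; auto. rewrite IHn by (intros; apply H; lia). rewrite H by lia; auto. Qed.

Lemma fsum_plus n f g : fsum n (fun i => f i + g i) = fsum n f + fsum n g.
Proof. induction n; simpl; [ring|rewrite IHn; ring]. Qed.

Lemma fsum_scal n c f : c * fsum n f = fsum n (fun i => c * f i).
Proof. induction n; simpl; [ring|rewrite <- IHn; ring]. Qed.

Lemma fsum_le n f g : (forall i, (i < n)%nat -> f i <= g i) -> fsum n f <= fsum n g.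
Proof. induction n; simpl; intros; [lra|]. pose proof (H n (Nat.lt_succ_diag_r n)).
  assert (fsum n f <= fsum n g) by (apply IHn; intros; apply H; lia). lra. Qed.

Lemma fsum_ge0 n f : (forall i, (i < n)%nat -> 0 <= f i) -> 0 <= fsum n f.
Proof. intros; replace 0 with (fsum n (fun _ => 0)). apply fsum_le; auto.
  induction n; simpl; auto. rewrite IHn; [ring|intros; apply H; lia]. Qed.

Lemma fsum_zero n : fsum n (fun _ => 0) = 0.
Proof. induction n; simpl; auto; rewrite IHn; ring. Qed.

Lemma fsum_ge0_eq0 n f : (forall i, (i < n)%nat -> 0 <= f i) -> fsum n f = 0 ->
  forall i, (i < n)%nat -> f i = 0.
Proof.
  induction n; simpl; intros H E i Hi; [lia|].
  assert (0 <= fsum n f) by (apply fsum_ge0; intros; apply H; lia).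
  assert (0 <= f n) by (apply H; lia).
  destruct (Nat.eq_dec i n); [subst; lra|]. apply IHn; [intros; apply H; lia|lra|lia].
Qed.

Lemma deriv_aux s c : 0 < c ->
  derivable_pt_lim (fun x => Rpower x s - s * x) c (s * Rpower c (s-1) - s).
Proof.
  intros Hc. apply derivable_pt_lim_minus. apply derivable_pt_lim_power; auto.
  replace s with (s * 1) at 2 by ring.
  apply derivable_pt_lim_scal. apply derivable_pt_lim_id.
Qed.

Lemma bernoulli t s : 0 <= t -> 1 <= s -> 1 + s * (t - 1) <= rpow t s.
Proof.
  intros Ht Hs. destruct Ht as [Ht|Ht]; [|subst; rewrite rpow_0; nra].
  rewrite rpow_posE by auto.
  destruct (Rtotal_order t 1) as [Hlt|[Heq|Hgt]].
  - destruct (MVT_cor2 (fun x => Rpower x s - s * x) (fun c => s * Rpower c (s-1) - s) t 1 Hlt)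
      as [c [E Hc]].
    { intros; apply deriv_aux; lra. }
    assert (Rpower c (s-1) <= 1).
    { unfold Rpower. apply Rle_trans with (exp 0); [|rewrite exp_0; lra]. destruct (Rle_lt_or_eq_dec 0 (s-1)) as [h|h]; [lra| |].
      - left; apply exp_increasing.
        assert (ln c < 0). { rewrite <- ln_1. apply ln_increasing; lra. } nra.
      - rewrite <- h. right; f_equal; ring. }
    replace (Rpower 1 s) with 1 in E by (unfold Rpower; rewrite ln_1, Rmult_0_r, exp_0; auto).
    assert (0 <= (s - s*Rpower c (s-1))*(1-t)) by (apply Rmult_le_pos; nra). lra.
  - subst. unfold Rpower; rewrite ln_1, Rmult_0_r, exp_0; lra.
  - destruct (MVT_cor2 (fun x => Rpower x s - s * x) (fun c => s * Rpower c (s-1) - s) 1 t Hgt)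
      as [c [E Hc]].
    { intros; apply deriv_aux; lra. }
    assert (1 <= Rpower c (s-1)).
    { apply Rle_trans with (Rpower c 0); [rewrite Rpower_O; lra|apply Rle_Rpower; lra]. }
    replace (Rpower 1 s) with 1 in E by (unfold Rpower; rewrite ln_1, Rmult_0_r, exp_0; auto).    assert (0 <= (s*Rpower c (s-1) - s)*(t-1)) by (apply Rmult_le_pos; nra). lra.
Qed.

Lemma div_ge0 a b : 0 <= a -> 0 < b -> 0 <= a/b.
Proof. intros; unfold Rdiv; apply Rmult_le_pos; [auto|left; apply Rinv_0_lt_compat; auto]. Qed.

Lemma convex_rpow a b l s : 0 <= a -> 0 <= b -> 0 <= l <= 1 -> 1 <= s ->
  rpow (l*a + (1-l)*b) s <= l * rpow a s + (1-l) * rpow b s.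
Proof.
  intros Ha Hb Hl Hs. set (c := l*a + (1-l)*b).
  assert (Hc: 0 <= c) by (unfold c; nra).
  pose proof (rpow_ge0 a s); pose proof (rpow_ge0 b s).
  destruct Hc as [Hc|Hc]; [|rewrite <- Hc, rpow_0; nra].
  set (P := rpow c s). assert (HP: 0 < P) by (apply rpow_gt0; auto).
  assert (Ea: P * (1 + s * (a/c - 1)) <= rpow a s).
  { pose proof (bernoulli (a/c) s) as B. rewrite rpow_div in B by lra. fold P in B.
    assert (0 <= a/c) by (apply div_ge0; lra).
    apply B in H1; auto. apply (Rmult_le_compat_l P) in H1; [|lra].
    replace (P * (rpow a s / P)) with (rpow a s) in H1 by (field; lra). auto. }
  assert (Eb: P * (1 + s * (b/c - 1)) <= rpow b s).
  { pose proof (bernoulli (b/c) s) as B. rewrite rpow_div in B by lra. fold P in B.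
    assert (0 <= b/c) by (apply div_ge0; lra).
    apply B in H1; auto. apply (Rmult_le_compat_l P) in H1; [|lra].
    replace (P * (rpow b s / P)) with (rpow b s) in H1 by (field; lra). auto. }
  assert (Id: l * (P * (1 + s * (a/c - 1))) + (1-l) * (P * (1 + s * (b/c - 1))) = P).
  { replace (l * (P * (1 + s * (a/c - 1))) + (1-l) * (P * (1 + s * (b/c - 1))))
      with (P + P * s * ((l*a + (1-l)*b)/c - 1)) by (field; lra).
    fold c. replace (c/c) with 1 by (field; lra). ring. }
  apply Rmult_le_compat_l with (r := l) in Ea; [|lra].
  apply Rmult_le_compat_l with (r := 1 - l) in Eb; [|lra]. lra.
Qed.

Definition lnorm (s : R) (m : nat) (u : nat -> R) : R :=
  rpow (fsum m (fun i => rpow (u i) s)) (/s).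

Lemma lnorm_ge0 s m u : 0 <= lnorm s m u.
Proof. apply rpow_ge0. Qed.

Lemma lnorm_ext s m u v : (forall i, (i < m)%nat -> u i = v i) -> lnorm s m u = lnorm s m v.
Proof. intros; unfold lnorm; f_equal; apply fsum_ext; intros; rewrite H; auto. Qed.

Lemma lnorm_homog s m c u : 0 < s -> 0 <= c -> (forall i, (i < m)%nat -> 0 <= u i) ->
  lnorm s m (fun i => c * u i) = c * lnorm s m u.
Proof.
  intros Hs Hc Hu. unfold lnorm.
  rewrite (fsum_ext m _ (fun i => rpow c s * rpow (u i) s)) by (intros; apply rpow_mul; auto).
  rewrite <- fsum_scal. rewrite rpow_mul; [|apply rpow_ge0|apply fsum_ge0; intros; apply rpow_ge0].
  rewrite rpow_id; auto; lra.
Qed.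

Lemma lnorm_mono s m u v : 0 < s -> (forall i, (i < m)%nat -> 0 <= u i <= v i) ->
  lnorm s m u <= lnorm s m v.
Proof.
  intros Hs H. unfold lnorm. apply rpow_le; [|left; apply Rinv_0_lt_compat; auto].
  split; [apply fsum_ge0; intros; apply rpow_ge0|]. apply fsum_le; intros.
  apply rpow_le; [apply H; auto|lra].
Qed.

Lemma lnorm_zero s m u : 0 < s -> (forall i, (i < m)%nat -> 0 <= u i) -> lnorm s m u = 0 ->
  forall i, (i < m)%nat -> u i = 0.
Proof.
  intros Hs Hu E i Hi. unfold lnorm in E. apply rpow_zero_inv in E;
    [|apply fsum_ge0; intros; apply rpow_ge0].
  eapply fsum_ge0_eq0 in E; eauto; [|intros; apply rpow_ge0].
  apply rpow_zero_inv in E; auto.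
Qed.

Lemma lnorm_pow s m u : 0 < s -> rpow (lnorm s m u) s = fsum m (fun i => rpow (u i) s).
Proof.
  intros Hs. unfold lnorm. rewrite rpow_mult by (apply fsum_ge0; intros; apply rpow_ge0).
  rewrite Rinv_l by lra. apply rpow_1. apply fsum_ge0; intros; apply rpow_ge0.
Qed.

Lemma minkowski s m u v : 1 <= s -> (forall i, (i < m)%nat -> 0 <= u i) ->
  (forall i, (i < m)%nat -> 0 <= v i) ->
  lnorm s m (fun i => u i + v i) <= lnorm s m u + lnorm s m v.
Proof.
  intros Hs Hu Hv. set (al := lnorm s m u). set (be := lnorm s m v).
  assert (Ha: 0 <= al) by apply lnorm_ge0. assert (Hb: 0 <= be) by apply lnorm_ge0.
  destruct Ha as [Ha|Ha].
  2:{ rewrite (lnorm_ext s m _ v). fold be; lra. intros. rewrite (lnorm_zero s m u); auto; [ring|lra]. }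
  destruct Hb as [Hb|Hb].
  2:{ rewrite (lnorm_ext s m _ u). fold al; lra. intros. rewrite (lnorm_zero s m v); auto; [ring|lra]. }
  set (l := al / (al + be)).
  assert (Hl: 0 <= l <= 1).
  { unfold l; split; [apply div_ge0; lra|]. apply Rmult_le_reg_r with (al+be); [lra|].
    field_simplify; lra. }
  assert (Key: fsum m (fun i => rpow ((u i + v i)/(al+be)) s) <= 1).
  { apply Rle_trans with (fsum m (fun i => l * rpow (u i / al) s + (1-l) * rpow (v i / be) s)).
    - apply fsum_le; intros i Hi.
      replace ((u i + v i)/(al+be)) with (l * (u i / al) + (1-l) * (v i / be)) by (unfold l; field; lra).
      apply convex_rpow; auto; try (apply div_ge0; auto).
    - rewrite fsum_plus, <- !fsum_scal.
      rewrite (fsum_ext m _ (fun i => / rpow al s * rpow (u i) s)) by (intros; rewrite rpow_div by auto; unfold Rdiv; ring).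
      rewrite (fsum_ext m (fun i => rpow (v i / be) s) (fun i => / rpow be s * rpow (v i) s))
        by (intros; rewrite rpow_div by auto; unfold Rdiv; ring).
      rewrite <- !fsum_scal. unfold al, be. rewrite !lnorm_pow by lra.
      assert (0 < fsum m (fun i => rpow (u i) s)).
      { rewrite <- lnorm_pow by lra. apply rpow_gt0; auto. }
      assert (0 < fsum m (fun i => rpow (v i) s)).
      { rewrite <- lnorm_pow by lra. apply rpow_gt0; auto. }
      rewrite !Rinv_l by lra. lra. }
  rewrite (fsum_ext m _ (fun i => / rpow (al+be) s * rpow (u i + v i) s)) in Key.
  2:{ intros. rewrite rpow_div by (try apply Rplus_le_le_0_compat; auto; lra). unfold Rdiv; ring. }
  rewrite <- fsum_scal in Key.
  assert (0 < rpow (al+be) s) by (apply rpow_gt0; lra).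
  assert (K2: fsum m (fun i => rpow (u i + v i) s) <= rpow (al + be) s).
  { apply Rmult_le_reg_l with (/ rpow (al+be) s). apply Rinv_0_lt_compat; auto.
    rewrite Rinv_l; lra. }
  unfold lnorm. rewrite <- (rpow_id (al+be) s) by lra.
  apply rpow_le; [split; [apply fsum_ge0; intros; apply rpow_ge0|auto]|].
  left; apply Rinv_0_lt_compat; lra.
Qed.

Definition cons1 (a : R) (s : nat -> R) : nat -> R :=
  fun j => match j with 0 => 0 | S 0 => a | S j' => s j' end.

Fixpoint Avg (N : nat) (G : (nat -> R) -> R) : R :=
  match N with
  | O => G (fun _ => 0)
  | S N' => (Avg N' (fun s => G (cons1 1 s)) + Avg N' (fun s => G (cons1 (-1) s))) / 2
  end.

Definition bnd (s : nat -> R) := forall j, Rabs (s j) <= 1.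

Lemma bnd_cons1 a s : Rabs a <= 1 -> bnd s -> bnd (cons1 a s).
Proof. intros Ha Hs [|[|j]]; simpl; auto. rewrite Rabs_R0; lra. Qed.

Lemma Avg_ext N F G : (forall s, F s = G s) -> Avg N F = Avg N G.
Proof.
  revert F G; induction N; simpl; intros; auto.
  f_equal; f_equal; apply IHN; auto.
Qed.

Lemma Avg_plus N F G : Avg N (fun s => F s + G s) = Avg N F + Avg N G.
Proof.
  revert F G; induction N; simpl; intros; auto.
  rewrite (IHN (fun s => F (cons1 1 s))), (IHN (fun s => F (cons1 (-1) s))). field.
Qed.

Lemma Avg_scal N c F : Avg N (fun s => c * F s) = c * Avg N F.
Proof.
  revert F; induction N; simpl; intros; auto.
  rewrite (IHN (fun s => F (cons1 1 s))), (IHN (fun s => F (cons1 (-1) s))). field.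
Qed.

Lemma Avg_const N c : Avg N (fun _ => c) = c.
Proof. induction N; simpl; auto. rewrite IHN; field. Qed.

Lemma Avg_le_bnd N F G : (forall s, bnd s -> F s <= G s) -> Avg N F <= Avg N G.
Proof.
  revert F G; induction N; simpl; intros F G H.
  - apply H. intros j; rewrite Rabs_R0; lra.
  - assert (Avg N (fun s => F (cons1 1 s)) <= Avg N (fun s => G (cons1 1 s))).
    { apply IHN; intros; apply H; apply bnd_cons1; auto. rewrite Rabs_R1; lra. }
    assert (Avg N (fun s => F (cons1 (-1) s)) <= Avg N (fun s => G (cons1 (-1) s))).
    { apply IHN; intros; apply H; apply bnd_cons1; auto. apply Rabs_le; lra. }
    lra.
Qed.

Lemma Avg_le N F G : (forall s, F s <= G s) -> Avg N F <= Avg N G.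
Proof. intros; apply Avg_le_bnd; auto. Qed.

Lemma Avg_ge0 N F : (forall s, 0 <= F s) -> 0 <= Avg N F.
Proof. intros; rewrite <- (Avg_const N 0); apply Avg_le; auto. Qed.

Lemma Avg_fsum N m F : Avg N (fun s => fsum m (fun i => F i s)) = fsum m (fun i => Avg N (F i)).
Proof.
  induction m; simpl. apply Avg_const.
  rewrite (Avg_plus N (fun s => fsum m (fun i => F i s)) (F m)). rewrite IHm; auto.
Qed.

Lemma Avg_minkowski N s m h : 1 <= s -> (forall i σ, 0 <= h i σ) ->
  lnorm s m (fun i => Avg N (h i)) <= Avg N (fun σ => lnorm s m (fun i => h i σ)).
Proof.
  revert h; induction N; simpl; intros h Hs Hh; [lra|].
  set (P := fun i => Avg N (fun σ => h i (cons1 1 σ))).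
  set (Q := fun i => Avg N (fun σ => h i (cons1 (-1) σ))).
  assert (HP: forall i, 0 <= P i) by (intros; apply Avg_ge0; auto).
  assert (HQ: forall i, 0 <= Q i) by (intros; apply Avg_ge0; auto).
  rewrite (lnorm_ext s m _ (fun i => /2 * (P i + Q i))) by (intros; unfold P, Q; field).
  rewrite lnorm_homog; try lra; [|intros; pose proof (HP i); pose proof (HQ i); lra].
  pose proof (minkowski s m P Q Hs (fun i _ => HP i) (fun i _ => HQ i)).
  pose proof (IHN (fun i σ => h i (cons1 1 σ)) Hs (fun i σ => Hh i _)).
  pose proof (IHN (fun i σ => h i (cons1 (-1) σ)) Hs (fun i σ => Hh i _)).
  cbv beta in H0, H1. fold P in H0. fold Q in H1. lra.
Qed.

Definition scons (s : nat -> R) (Sg : nat -> nat -> R) : nat -> nat -> R :=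
  fun k => match k with 0 => s | S k' => Sg k' end.

Fixpoint AvgM (d N : nat) (G : (nat -> nat -> R) -> R) : R :=
  match d with
  | O => G (fun _ _ => 0)
  | S d' => AvgM d' N (fun Sg => Avg N (fun s => G (scons s Sg)))
  end.

Definition bndM (Sg : nat -> nat -> R) := forall k, bnd (Sg k).

Lemma AvgM_ext d N F G : (forall s, F s = G s) -> AvgM d N F = AvgM d N G.
Proof.
  revert F G; induction d; simpl; intros; auto.
  apply IHd; intros; apply Avg_ext; auto.
Qed.

Lemma AvgM_plus d N F G : AvgM d N (fun s => F s + G s) = AvgM d N F + AvgM d N G.
Proof.
  revert F G; induction d; simpl; intros; auto.
  rewrite <- IHd. apply AvgM_ext; intros; apply Avg_plus.
Qed.

Lemma AvgM_scal d N c F : AvgM d N (fun s => c * F s) = c * AvgM d N F.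
Proof.
  revert F; induction d; simpl; intros; auto.
  rewrite <- IHd. apply AvgM_ext; intros; apply Avg_scal.
Qed.

Lemma AvgM_const d N c : AvgM d N (fun _ => c) = c.
Proof.
  induction d; simpl; auto. transitivity (AvgM d N (fun _ => c)); [apply AvgM_ext; intros; apply Avg_const|apply IHd].
Qed.

Lemma AvgM_le_bnd d N F G : (forall s, bndM s -> F s <= G s) -> AvgM d N F <= AvgM d N G.
Proof.
  revert F G; induction d; simpl; intros F G H.
  - apply H. intros k j; rewrite Rabs_R0; lra.
  - apply IHd. intros Sg HSg. apply Avg_le_bnd. intros s Hs. apply H.
    intros [|k]; simpl; auto.
Qed.

Lemma AvgM_le d N F G : (forall s, F s <= G s) -> AvgM d N F <= AvgM d N G.
Proof. intros; apply AvgM_le_bnd; auto. Qed.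

Lemma AvgM_ge0 d N F : (forall s, 0 <= F s) -> 0 <= AvgM d N F.
Proof. intros; rewrite <- (AvgM_const d N 0); apply AvgM_le; auto. Qed.

Lemma AvgM_fsum d N m F : AvgM d N (fun s => fsum m (fun i => F i s)) = fsum m (fun i => AvgM d N (F i)).
Proof.
  induction m; simpl. apply AvgM_const.
  rewrite (AvgM_plus d N (fun s => fsum m (fun i => F i s)) (F m)). rewrite IHm; auto.
Qed.

Lemma AvgM_minkowski d N s m h : 1 <= s -> (forall i σ, 0 <= h i σ) ->
  lnorm s m (fun i => AvgM d N (h i)) <= AvgM d N (fun σ => lnorm s m (fun i => h i σ)).
Proof.
  revert h; induction d; simpl; intros h Hs Hh; [lra|].
  eapply Rle_trans.
  - apply (IHd (fun i Sg => Avg N (fun s0 => h i (scons s0 Sg)))); auto.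
    intros; apply Avg_ge0; auto.
  - apply AvgM_le; intros Sg. apply Avg_minkowski; auto.
Qed.

From Coquelicot Require Import Coquelicot.
Open Scope R_scope.

Definition radvec (t : R) : nat -> R := fun j => rad j t.
Definition depends (N : nat) (G : (nat -> R) -> R) :=
  forall s s', (forall j, (1 <= j <= N)%nat -> s j = s' j) -> G s = G s'.

Lemma rad_succ j t : rad (S j) t = rad j (2*t).
Proof. unfold rad. f_equal. f_equal. simpl. ring. Qed.

Lemma rad_succ' j t : (1 <= j)%nat -> rad (S j) t = rad j (2*t-1).
Proof.
  intros Hj. destruct j as [|j']; [lia|]. unfold rad. f_equal.
  rewrite <- (sin_period (2 ^ S j' * PI * (2*t-1)) (Nat.pow 2 j')). f_equal.
  rewrite pow_INR. simpl. replace (1+1) with 2 by ring. ring.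
Qed.

Lemma rad1_pos t : 0 < t < /2 -> rad 1 t = 1.
Proof.
  intros H. unfold rad, sgn. destruct (Rlt_dec 0 (sin (2 ^ 1 * PI * t))); auto.
  exfalso; apply n. apply sin_gt_0; simpl; pose proof PI_RGT_0; nra.
Qed.

Lemma rad1_neg t : /2 < t < 1 -> rad 1 t = -1.
Proof.
  intros H. unfold rad, sgn. pose proof PI_RGT_0.
  assert (sin (2 ^ 1 * PI * t) < 0) by (apply sin_lt_0; simpl; nra).
  destruct (Rlt_dec 0 (sin (2 ^ 1 * PI * t))); [lra|].
  destruct (Rlt_dec (sin (2 ^ 1 * PI * t)) 0); [auto|lra].
Qed.

Lemma is_RInt_const' (a b c : R) : is_RInt (fun _ => c) a b ((b - a) * c).
Proof. pose proof (is_RInt_const a b c) as H. exact H. Qed.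

Lemma rad_integral N G : depends N G -> is_RInt (fun t => G (radvec t)) 0 1 (Avg N G).
Proof.
  revert G; induction N; intros G HG.
  - simpl. assert (E: G (fun _ => 0) = (1-0) * G (fun _ => 0)) by ring. rewrite E. eapply is_RInt_ext; [|apply (is_RInt_const' 0 1 (G (fun _ => 0)))].
    intros x _. apply HG. intros; lia.
  - set (G1 := fun s => G (cons1 1 s)). set (G2 := fun s => G (cons1 (-1) s)).
    assert (D1: depends N G1).
    { intros s s' H; unfold G1; apply HG. intros [|[|j]] Hj; simpl; auto; try lia. apply H; lia. }
    assert (D2: depends N G2).
    { intros s s' H; unfold G2; apply HG. intros [|[|j]] Hj; simpl; auto; try lia. apply H; lia. }
    pose proof (IHN G1 D1) as I1. pose proof (IHN G2 D2) as I2.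
    apply (is_RInt_scal _ _ _ (/2)) in I1. apply (is_RInt_scal _ _ _ (/2)) in I2.
    assert (J1: is_RInt (fun y => scal 2 (scal (/2) (G1 (radvec (2*y+0))))) 0 (/2) (scal (/2) (Avg N G1))).
    { apply (is_RInt_comp_lin (fun t => scal (/2) (G1 (radvec t))) 2 0 0 (/2)).
      replace (2*0+0) with 0 by ring. replace (2*/2+0) with 1 by field. auto. }
    assert (J2: is_RInt (fun y => scal 2 (scal (/2) (G2 (radvec (2*y+-1))))) (/2) 1 (scal (/2) (Avg N G2))).
    { apply (is_RInt_comp_lin (fun t => scal (/2) (G2 (radvec t))) 2 (-1) (/2) 1).
      replace (2*/2+-1) with 0 by field. replace (2*1+-1) with 1 by ring. auto. }
    assert (L1: is_RInt (fun t => G (radvec t)) 0 (/2) (scal (/2) (Avg N G1))).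
    { eapply is_RInt_ext; [|exact J1].
      intros x Hx. rewrite Rmin_left, Rmax_right in Hx by lra.
      unfold scal; simpl; unfold mult; simpl. unfold G1.
      replace (2 * (/2 * G (cons1 1 (radvec (2*x+0))))) with (G (cons1 1 (radvec (2*x+0)))) by field.
      apply HG. intros [|[|j]] Hj; simpl; try lia.
      + symmetry; apply rad1_pos; lra.
      + unfold radvec. rewrite Rplus_0_r. symmetry; apply rad_succ. }
    assert (L2: is_RInt (fun t => G (radvec t)) (/2) 1 (scal (/2) (Avg N G2))).
    { eapply is_RInt_ext; [|exact J2].
      intros x Hx. rewrite Rmin_left, Rmax_right in Hx by lra.
      unfold scal; simpl; unfold mult; simpl. unfold G2.
      replace (2 * (/2 * G (cons1 (-1) (radvec (2*x+-1))))) with (G (cons1 (-1) (radvec (2*x+-1)))) by field.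
      apply HG. intros [|[|j]] Hj; simpl; try lia.
      + symmetry; apply rad1_neg; lra.
      + unfold radvec. replace (2*x+-1) with (2*x-1) by ring. symmetry; apply rad_succ'; lia. }
    pose proof (is_RInt_Chasles _ _ _ _ _ _ L1 L2) as K.
    simpl. replace ((Avg N (fun s : nat -> R => G (cons1 1 s)) + Avg N (fun s : nat -> R => G (cons1 (-1) s))) / 2)
      with (plus (scal (/2) (Avg N G1)) (scal (/2) (Avg N G2))); [exact K|].
    unfold plus, scal; simpl; unfold mult; simpl. unfold G1, G2. field.
Qed.

Lemma khin_disc r C : khin_adm r C -> forall n b,
  sqrt (fsum n (fun j => Rsqr (Rabs (b j))))
    <= C * rpow (Avg n (fun s => rpow (Rabs (fsum n (fun j => b j * s (S j)))) r)) (/ r).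
Proof.
  intros HK n b. destruct (HK n (fun j => match j with 0 => 0 | S j' => b j' end)) as [pr H].
  simpl in H. rewrite <- RInt_Reals in H.
  assert (E: RInt (fun t => rpow (Rabs (fsum n (fun j => b j * rad (S j) t))) r) 0 1
     = Avg n (fun s => rpow (Rabs (fsum n (fun j => b j * s (S j)))) r)).
  { apply is_RInt_unique. exact (rad_integral n (fun s => rpow (Rabs (fsum n (fun j => b j * s (S j)))) r) ltac:(
      intros s s' E; f_equal; f_equal; apply fsum_ext; intros; rewrite E; auto; lia)). }
  rewrite E in H. exact H.
Qed.

Definition icons (i : nat) (idx : nat -> nat) : nat -> nat :=
  fun k => match k with 0 => i | S k' => idx k' end.

Fixpoint fprod (d : nat) (F : nat -> R) : R :=
  match d with O => 1 | S d' => F O * fprod d' (fun k => F (S k)) end.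

Lemma multi_sum_S d n g : multi_sum (S d) n g = fsum n (fun i => multi_sum d n (fun idx => g (icons i idx))).
Proof. reflexivity. Qed.

Lemma multi_sum_ext d n g h : (forall idx, g idx = h idx) -> multi_sum d n g = multi_sum d n h.
Proof.
  revert g h; induction d; simpl; intros; auto. apply fsum_ext; intros; apply IHd; auto.
Qed.

Lemma multi_sum_scal d n c g : c * multi_sum d n g = multi_sum d n (fun idx => c * g idx).
Proof.
  revert g; induction d; simpl; intros; auto. rewrite fsum_scal. apply fsum_ext; intros; apply IHd.
Qed.

Lemma multi_sum_ge0 d n g : (forall idx, 0 <= g idx) -> 0 <= multi_sum d n g.
Proof.
  revert g; induction d; simpl; intros; auto. apply fsum_ge0; intros; apply IHd; auto.
Qed.

Lemma rpow_2 x : 0 <= x -> rpow x 2 = x * x.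
Proof.
  intros [H|H]; [|subst; rewrite rpow_0; ring].
  rewrite rpow_posE by auto. replace 2 with (INR 2) by (simpl; ring). rewrite Rpower_pow by auto. simpl; ring.
Qed.

Lemma multi_khin d n q C (a : (nat -> nat) -> R) : 1 <= q <= 2 -> khin_adm q C -> 0 <= C ->
  sqrt (multi_sum d n (fun idx => Rsqr (Rabs (a idx))))
  <= C ^ d * rpow (AvgM d n (fun Sg => rpow (Rabs (multi_sum d n
        (fun idx => a idx * fprod d (fun k => Sg k (S (idx k)))))) q)) (/ q).
Proof.
  intros Hq HK HC. revert a; induction d; intros a.
  - simpl. rewrite Rmult_1_r, Rmult_1_l, rpow_id by (try apply Rabs_pos; lra).
    rewrite sqrt_Rsqr by apply Rabs_pos. lra.
  - rewrite multi_sum_S.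
    set (G := fun i (Sg : nat -> nat -> R) => multi_sum d n (fun idx => a (icons i idx) * fprod d (fun k => Sg k (S (idx k))))).
    set (Phi := fun i => AvgM d n (fun Sg => rpow (Rabs (G i Sg)) q)).
    set (s0 := 2 / q).
    assert (Hs0: 1 <= s0) by (unfold s0; apply Rmult_le_reg_r with q; [lra|]; field_simplify; lra).
    assert (HPhi: forall i, 0 <= Phi i) by (intros; apply AvgM_ge0; intros; apply rpow_ge0).
    assert (S1: fsum n (fun i => multi_sum d n (fun idx => Rsqr (Rabs (a (icons i idx)))))
               <= (C ^ d * C ^ d) * fsum n (fun i => rpow (Phi i) s0)).
    { rewrite fsum_scal. apply fsum_le; intros i _.
      pose proof (IHd (fun idx => a (icons i idx))) as H0.
      set (Y := multi_sum d n (fun idx => Rsqr (Rabs (a (icons i idx))))) in *.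
      assert (H : sqrt Y <= C^d * rpow (Phi i) (/q)) by exact H0. clear H0.
      assert (HY: 0 <= Y) by (apply multi_sum_ge0; intros; apply Rle_0_sqr).
      assert (E: rpow (Phi i) s0 = rpow (Phi i) (/q) * rpow (Phi i) (/q)).
      { rewrite <- rpow_2 by apply rpow_ge0. rewrite rpow_mult by auto. unfold s0. f_equal; field; lra. }
      rewrite E. rewrite <- (sqrt_sqrt Y HY).
      pose proof (sqrt_pos Y). pose proof (rpow_ge0 (Phi i) (/q)).
      assert (0 <= C ^ d) by (apply pow_le; auto).
      assert (0 <= (C^d * rpow (Phi i) (/q) - sqrt Y)*(C^d * rpow (Phi i) (/q) + sqrt Y)) by (apply Rmult_le_pos; lra).
      nra. }
    assert (S2: sqrt (fsum n (fun i => multi_sum d n (fun idx => Rsqr (Rabs (a (icons i idx))))))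
               <= C ^ d * rpow (lnorm s0 n Phi) (/q)).
    { eapply Rle_trans; [apply sqrt_le_1_alt; exact S1|].
      assert (0 <= C ^ d) by (apply pow_le; auto).
      rewrite sqrt_mult; [|nra|apply fsum_ge0; intros; apply rpow_ge0].
      rewrite sqrt_square by auto. apply Rmult_le_compat_l; auto. right.
      unfold lnorm. rewrite rpow_mult by (apply fsum_ge0; intros; apply rpow_ge0).
      rewrite <- rpow_sqrt by (apply fsum_ge0; intros; apply rpow_ge0). f_equal. unfold s0; field; lra. }
    eapply Rle_trans; [exact S2|]. simpl (C ^ S d). rewrite (Rmult_comm C (C^d)), Rmult_assoc.
    apply Rmult_le_compat_l; [apply pow_le; auto|].
    pose proof (AvgM_minkowski d n s0 n (fun i Sg => rpow (Rabs (G i Sg)) q) Hs0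
       ltac:(intros; apply rpow_ge0)) as Mk.
    fold Phi in Mk. change (fun i => AvgM d n (fun Sg => rpow (Rabs (G i Sg)) q)) with Phi in Mk.
    eapply Rle_trans.
    { apply rpow_le; [split; [apply lnorm_ge0|exact Mk]|left; apply Rinv_0_lt_compat; lra]. }
    set (K := fun Sg => Avg n (fun s => rpow (Rabs (fsum n (fun i => G i Sg * s (S i)))) q)).
    assert (S3: forall Sg, lnorm s0 n (fun i => rpow (Rabs (G i Sg)) q) <= rpow C q * K Sg).
    { intros Sg. pose proof (khin_disc q C HK n (fun i => G i Sg)) as Kh. fold (K Sg) in Kh.
      assert (HKs: 0 <= K Sg) by (apply Avg_ge0; intros; apply rpow_ge0).
      assert (E: lnorm s0 n (fun i => rpow (Rabs (G i Sg)) q)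
                 = rpow (sqrt (fsum n (fun i => Rsqr (Rabs (G i Sg))))) q).
      { unfold lnorm. rewrite <- rpow_sqrt by (apply fsum_ge0; intros; apply Rle_0_sqr).
        rewrite rpow_mult by (apply fsum_ge0; intros; apply Rle_0_sqr).
        rewrite (fsum_ext n _ (fun i => Rsqr (Rabs (G i Sg)))).
        - replace (/ s0) with (q / 2) by (unfold s0; field; lra). f_equal. field.
        - intros. rewrite rpow_mult by apply Rabs_pos.
          replace (q * s0) with 2 by (unfold s0; field; lra). unfold Rsqr. apply rpow_2, Rabs_pos. }
      rewrite E. eapply Rle_trans.
      { apply rpow_le; [split; [apply sqrt_pos|exact Kh]|lra]. }
      rewrite rpow_mul by (auto; apply rpow_ge0). rewrite rpow_mult by auto.
      rewrite Rinv_l by lra. rewrite rpow_1 by auto. unfold K; lra. }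
    eapply Rle_trans.
    { apply rpow_le; [|left; apply Rinv_0_lt_compat; lra]. split.
      - apply AvgM_ge0; intros; apply lnorm_ge0.
      - apply AvgM_le. exact S3. }
    rewrite AvgM_scal. rewrite rpow_mul by (try apply rpow_ge0; apply AvgM_ge0; intros; apply Avg_ge0; intros; apply rpow_ge0).
    rewrite rpow_id by lra. apply Rmult_le_compat_l; auto. right. f_equal.
    simpl. apply AvgM_ext; intros Sg. unfold K. apply Avg_ext; intros s. f_equal. f_equal.
    apply fsum_ext; intros i _. unfold G.
    rewrite Rmult_comm, multi_sum_scal. apply multi_sum_ext; intros idx. unfold icons. ring.
Qed.

Definition fin_supp (v : nat -> R) := exists N, forall i, (N <= i)%nat -> v i = 0.

Lemma sum_f_R0_fsum f n : sum_f_R0 f n = fsum (S n) f.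
Proof. induction n; simpl; [ring|]. simpl in IHn. rewrite IHn; ring. Qed.

Lemma fsum_stable f N m : (forall i, (N <= i)%nat -> f i = 0) -> (N <= m)%nat -> fsum m f = fsum N f.
Proof.
  intros H Hm. induction Hm; auto. simpl. rewrite IHHm, H by lia. ring.
Qed.

Lemma infsum_fin f N : (forall i, (N <= i)%nat -> f i = 0) -> infinite_sum f (fsum N f).
Proof.
  intros H eps Heps. exists N. intros m Hm. rewrite sum_f_R0_fsum.
  rewrite (fsum_stable f N (S m)) by (auto; lia). unfold R_dist. rewrite Rminus_diag, Rabs_R0; auto.
Qed.

Lemma fin_supp_cv v : fin_supp v -> Un_cv v 0.
Proof.
  intros [N H] eps Heps. exists N. intros m Hm. unfold R_dist. rewrite H by lia.
  rewrite Rminus_diag, Rabs_R0; auto.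
Qed.

Lemma fin_supp_inX e' v : fin_supp v -> inX e' v.
Proof.
  intros Hv. destruct e' as [p|]; simpl.
  - destruct Hv as [N H]. exists (fsum N (fun i => rpow (Rabs (v i)) p)).
    apply infsum_fin. intros i Hi. rewrite H by auto. rewrite Rabs_R0. apply rpow_0.
  - apply fin_supp_cv; auto.
Qed.

Lemma zero_fin : fin_supp (fun _ => 0).
Proof. exists O; auto. Qed.

Lemma evec_fin i : fin_supp (evec i).
Proof. exists (S i). intros j Hj. unfold evec. destruct (Nat.eq_dec i j); [lia|auto]. Qed.

Lemma comb_fin n c : fin_supp (fun i => fsum n (fun j => c j * evec j i)).
Proof.
  exists n. intros i Hi. rewrite <- (fsum_zero n). apply fsum_ext. intros j Hj.
  unfold evec. destruct (Nat.eq_dec j i); [lia|ring].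
Qed.

Lemma comb_val n c i : fsum n (fun j => c j * evec j i) = if Nat.ltb i n then c i else 0.
Proof.
  induction n. { reflexivity. }
  change (fsum (S n) (fun j => c j * evec j i)) with (fsum n (fun j => c j * evec j i) + c n * evec n i).
  rewrite IHn. unfold evec.
  destruct (Nat.ltb_spec i n), (Nat.ltb_spec i (S n)), (Nat.eq_dec n i); subst; try lia; ring.
Qed.

Definition xvec (n : nat) (s : nat -> R) : nat -> R := fun i => fsum n (fun j => s (S j) * evec j i).

Lemma xvec_bnd n s i : bnd s -> Rabs (xvec n s i) <= 1.
Proof.
  intros H. unfold xvec. rewrite comb_val. destruct (Nat.ltb i n); auto. rewrite Rabs_R0; lra.
Qed.

Lemma upd_same x k v : upd x k v k = v.
Proof. unfold upd. destruct (Nat.eq_dec k k); auto; congruence. Qed.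

Lemma upd_upd x k v w : upd (upd x k v) k w = upd x k w.
Proof. apply functional_extensionality; intros j. unfold upd. destruct (Nat.eq_dec j k); auto. Qed.

Section ML.
Variables (M : nat) (e : Exp) (T : (nat -> nat -> R) -> R).
Hypothesis HML : is_multilinear M e T.

Lemma valid_X x : (forall j, fin_supp (x j)) -> forall j, (j < M)%nat -> inX (slot e j) (x j).
Proof. intros; apply fin_supp_inX; auto. Qed.

Lemma upd_fin x k v : (forall j, fin_supp (x j)) -> fin_supp v -> forall j, fin_supp (upd x k v j).
Proof. intros; unfold upd; destruct (Nat.eq_dec j k); auto. Qed.

Lemma T_zero x k : (k < M)%nat -> (forall j, fin_supp (x j)) -> T (upd x k (fun _ => 0)) = 0.
Proof.
  intros Hk Hx. set (x' := upd x k (fun _ => 0)).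
  assert (Hx' : forall j, fin_supp (x' j)).
  { apply upd_fin; auto. apply zero_fin. }
  pose proof (HML x' k (fun _ => 0) 1 Hk (valid_X x' Hx') (fin_supp_inX _ _ zero_fin)) as E.
  unfold x' in E. rewrite !upd_upd, !upd_same in E.
  replace (fun i : nat => 1 * 0 + 0) with (fun _ : nat => 0) in E
    by (apply functional_extensionality; intros; ring).
  unfold x'. lra.
Qed.

Lemma T_expand x k n c : (k < M)%nat -> (forall j, fin_supp (x j)) ->
  T (upd x k (fun i => fsum n (fun j => c j * evec j i))) = fsum n (fun j => c j * T (upd x k (evec j))).
Proof.
  intros Hk Hx. induction n; simpl.
  - apply T_zero; auto.
  - set (x' := upd x k (evec n)).
    assert (Hx' : forall j, fin_supp (x' j)) by (apply upd_fin; auto; apply evec_fin).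
    pose proof (HML x' k (fun i => fsum n (fun j => c j * evec j i)) (c n) Hk (valid_X x' Hx')
       (fin_supp_inX _ _ (comb_fin n c))) as E.
    unfold x' in E. rewrite !upd_upd, !upd_same in E.
    rewrite <- IHn.
    replace (fun i : nat => fsum n (fun j : nat => c j * evec j i) + c n * evec n i)
      with (fun i : nat => c n * evec n i + fsum n (fun j : nat => c j * evec j i))
      by (apply functional_extensionality; intros; ring).
    rewrite E. unfold x'. ring.
Qed.
End ML.

Definition glue (o : nat) (V W : nat -> nat -> R) : nat -> nat -> R :=
  fun k => if Nat.ltb k o then V k else W (k - o)%nat.

Lemma glue_fin o V W : (forall k, fin_supp (V k)) -> (forall k, fin_supp (W k)) ->
  forall k, fin_supp (glue o V W k).
Proof. intros; unfold glue; destruct (Nat.ltb k o); auto. Qed.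

Lemma xvec_fin n s : fin_supp (xvec n s).
Proof. apply comb_fin. Qed.

Section EXP.
Variables (M : nat) (e : Exp) (T : (nat -> nat -> R) -> R) (n : nat).
Hypothesis HML : is_multilinear M e T.
Hypothesis HD : depends_on_first M T.

Lemma expand_multi d : forall o V Sg, (o + d = M)%nat -> (forall k, fin_supp (V k)) ->
  T (glue o V (fun k => xvec n (Sg k)))
  = multi_sum d n (fun idx => T (glue o V (fun k => evec (idx k))) * fprod d (fun k => Sg k (S (idx k)))).
Proof.
  induction d; intros o V Sg Ho HV.
  - simpl. rewrite Rmult_1_r. apply HD. intros k Hk. unfold glue.
    replace (Nat.ltb k o) with true by (symmetry; apply Nat.ltb_lt; lia). auto.
  - set (V' := fun j k => if Nat.ltb k o then V k else evec j).
    assert (HV' : forall j k, fin_supp (V' j k)).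
    { intros; unfold V'; destruct (Nat.ltb k o); auto; apply evec_fin. }
    assert (Hfin : forall k, fin_supp (glue o V (fun k => xvec n (Sg k)) k))
      by (apply glue_fin; auto; intros; apply xvec_fin).
    replace (glue o V (fun k => xvec n (Sg k)))
      with (upd (glue o V (fun k => xvec n (Sg k))) o (fun i => fsum n (fun j => Sg O (S j) * evec j i))).
    2:{ apply functional_extensionality; intros k. unfold upd, glue.
        destruct (Nat.eq_dec k o); auto. subst.
        replace (Nat.ltb o o) with false by (symmetry; apply Nat.ltb_ge; lia).
        rewrite Nat.sub_diag. reflexivity. }
    rewrite (T_expand M e T HML) by (auto; lia).
    rewrite multi_sum_S. apply fsum_ext; intros j _.
    replace (upd (glue o V (fun k => xvec n (Sg k))) o (evec j))
      with (glue (S o) (V' j) (fun k => xvec n (Sg (S k)))).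
    2:{ apply functional_extensionality; intros k. unfold upd, glue, V'.
        destruct (Nat.eq_dec k o).
        - subst. replace (Nat.ltb o (S o)) with true by (symmetry; apply Nat.ltb_lt; lia).
          replace (Nat.ltb o o) with false by (symmetry; apply Nat.ltb_ge; lia). auto.
        - destruct (Nat.ltb_spec k o), (Nat.ltb_spec k (S o)); try lia; auto.
          f_equal. f_equal. lia. }
    rewrite (IHd (S o) (V' j) (fun k => Sg (S k))) by (auto; lia).
    rewrite multi_sum_scal. apply multi_sum_ext; intros idx.
    replace (glue o V (fun k => evec (icons j idx k)))
      with (glue (S o) (V' j) (fun k => evec (idx k))).
    2:{ apply functional_extensionality; intros k. unfold glue, V'.
        destruct (Nat.ltb_spec k o), (Nat.ltb_spec k (S o)); try lia; auto.
        - replace k with o by lia. rewrite Nat.sub_diag. reflexivity.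
        - replace (k - o)%nat with (S (k - S o)) by lia. reflexivity. }
    simpl. ring.
Qed.
End EXP.

Definition sg (x : R) : R := if Rle_dec 0 x then 1 else -1.
Lemma sg_mul x : sg x * x = Rabs x.
Proof. unfold sg; destruct (Rle_dec 0 x); [rewrite Rabs_right; lra|rewrite Rabs_left; lra]. Qed.
Lemma sg_abs x : Rabs (sg x) = 1.
Proof. unfold sg; destruct (Rle_dec 0 x); [apply Rabs_R1|rewrite Rabs_left; lra]. Qed.

Definition comb (n : nat) (c : nat -> R) : nat -> R := fun i => fsum n (fun j => c j * evec j i).

Lemma abs_rpow_split x q : 1 <= q -> Rabs x * rpow (Rabs x) (q - 1) = rpow (Rabs x) q.
Proof.
  intros Hq. destruct (Rabs_pos x) as [H|H].
  - replace q with (1 + (q-1)) at 2 by ring. rewrite rpow_plus by auto. rewrite rpow_1; lra.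
  - rewrite <- H, !rpow_0; ring.
Qed.

Lemma infsum_fin' f N l : (forall i, (N <= i)%nat -> f i = 0) -> fsum N f = l -> infinite_sum f l.
Proof. intros H E; rewrite <- E; apply infsum_fin; auto. Qed.

Section DUAL.
Variables (M : nat) (e : Exp) (T : (nat -> nat -> R) -> R) (n : nat) (normT : R).
Hypothesis HML : is_multilinear M e T.
Hypothesis HD : depends_on_first M T.
Hypothesis HM : (1 <= M)%nat.
Hypothesis Hlub : is_lub (norm_set M e T) normT.
Hypothesis He : exp_ge2 e.

Lemma comb_T c W : (forall k, fin_supp (W k)) ->
  T (glue 1 (fun _ => comb n c) W) = fsum n (fun j => c j * T (glue 1 (fun _ => evec j) W)).
Proof.
  intros HW.
  replace (glue 1 (fun _ => comb n c) W) with (upd (glue 1 (fun _ => evec O) W) O (fun i => fsum n (fun j => c j * evec j i))).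
  2:{ apply functional_extensionality; intros k; unfold upd, glue. destruct (Nat.eq_dec k 0); subst; auto. 
      replace (Nat.ltb k 1) with false by (symmetry; apply Nat.ltb_ge; lia). auto. }
  rewrite (T_expand M e T HML) by (auto; try lia; apply glue_fin; auto; intros; apply evec_fin).
  apply fsum_ext; intros j _. f_equal. f_equal.
  apply functional_extensionality; intros k; unfold upd, glue. destruct (Nat.eq_dec k 0); subst; auto.
  replace (Nat.ltb k 1) with false by (symmetry; apply Nat.ltb_ge; lia). auto.
Qed.

Lemma ball_bound c Sg : bndM Sg -> inBall e (comb n c) ->
  Rabs (fsum n (fun j => c j * T (glue 1 (fun _ => evec j) (fun k => xvec n (Sg k))))) <= normT.
Proof.
  intros HS Hb. rewrite <- comb_T by (intros; apply xvec_fin).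
  destruct Hlub as [Hub _]. apply Hub.
  exists (glue 1 (fun _ => comb n c) (fun k => xvec n (Sg k))). split; auto.
  intros [|k] Hk; unfold glue; simpl; auto.
  rewrite Nat.sub_0_r. split; [apply fin_supp_cv, xvec_fin|intros; apply xvec_bnd; auto].
Qed.

Lemma comb_val' c i : comb n c i = if Nat.ltb i n then c i else 0.
Proof. apply comb_val. Qed.

Lemma zero_ball : inBall e (comb n (fun _ => 0)).
Proof.
  destruct e as [p|]; simpl.
  - exists 0. split.
    + apply (infsum_fin' _ n). intros i Hi. rewrite comb_val'. replace (Nat.ltb i n) with false
        by (symmetry; apply Nat.ltb_ge; lia). rewrite Rabs_R0; apply rpow_0.
      transitivity (fsum n (fun _ => 0)); [|apply fsum_zero]. apply fsum_ext; intros. rewrite comb_val'.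
      destruct (Nat.ltb i n); cbv beta; rewrite Rabs_R0; apply rpow_0.
    + rewrite rpow_0; lra.
  - split. apply fin_supp_cv, comb_fin. intros; rewrite comb_val'.
    destruct (Nat.ltb i n); cbv beta; rewrite Rabs_R0; lra.
Qed.

Lemma normT_ge0 : 0 <= normT.
Proof.
  set (Sg := fun (_ : nat) (_ : nat) => 0).
  assert (bndM Sg) by (intros k j; unfold Sg; rewrite Rabs_R0; lra).
  pose proof (ball_bound (fun _ => 0) Sg H zero_ball).
  pose proof (Rabs_pos (fsum n (fun j : nat => 0 * T (glue 1 (fun _ : nat => evec j) (fun k : nat => xvec n (Sg k)))))).
  lra.
Qed.

Lemma dual_bound Sg : bndM Sg ->
  fsum n (fun i => rpow (Rabs (T (glue 1 (fun _ => evec i) (fun k => xvec n (Sg k))))) (conj_exp e))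
  <= rpow normT (conj_exp e).
Proof.
  intros HS. set (b := fun i => T (glue 1 (fun _ => evec i) (fun k => xvec n (Sg k)))).
  change (fsum n (fun i => rpow (Rabs (b i)) (conj_exp e)) <= rpow normT (conj_exp e)).
  set (B := fsum n (fun i => rpow (Rabs (b i)) (conj_exp e))).
  pose proof normT_ge0 as HN. pose proof ball_bound as BB.
  assert (HB: 0 <= B) by (apply fsum_ge0; intros; apply rpow_ge0).
  destruct HB as [HB|HB]; [|rewrite <- HB; apply rpow_ge0].
  destruct e as [p|] eqn:Ee; simpl in *.
  -
    set (q := p / (p-1)) in *.
    assert (Hq1: 1 <= q) by (unfold q; apply Rmult_le_reg_r with (p-1); [lra|]; field_simplify; lra).
    set (c := fun j => sg (b j) * rpow (Rabs (b j)) (q - 1) / rpow B (/p)).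
    assert (HBp: 0 < rpow B (/p)) by (apply rpow_gt0; auto).
    assert (Eval: fsum n (fun j => c j * b j) = rpow B (/q)).
    { unfold c. rewrite (fsum_ext n _ (fun j => / rpow B (/p) * rpow (Rabs (b j)) q)).
      - rewrite <- fsum_scal. fold B. replace (/q) with (1 + - / p) by (unfold q; field; lra).
        rewrite rpow_plus by auto. rewrite rpow_1 by lra.
        replace (rpow B (- / p)) with (/ rpow B (/p)). field; lra.
        assert (E: rpow B (-/p) * rpow B (/p) = 1).
        { rewrite <- rpow_plus by auto. replace (-/p + /p) with 0 by ring. apply rpow_0_r; auto. }
        apply Rmult_eq_reg_r with (rpow B (/p)); [rewrite Rinv_l; lra|lra].
      - intros j _. rewrite <- (abs_rpow_split (b j) q Hq1). rewrite <- sg_mul. field; lra. }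
    assert (Hball: inBall (Fin p) (comb n c)).
    { simpl. exists 1. split.
      - apply (infsum_fin' _ n).
        + intros i Hi. rewrite comb_val'. replace (Nat.ltb i n) with false
            by (symmetry; apply Nat.ltb_ge; lia). rewrite Rabs_R0; apply rpow_0.
        + rewrite (fsum_ext n _ (fun i => / B * rpow (Rabs (b i)) q)).
          * rewrite <- fsum_scal. fold B. field; lra.
          * intros i Hi. rewrite comb_val'. replace (Nat.ltb i n) with true by (symmetry; apply Nat.ltb_lt; lia).
            unfold c. unfold Rdiv. rewrite !Rabs_mult, sg_abs, Rmult_1_l.
            rewrite (Rabs_right (rpow _ _)) by (apply Rle_ge, rpow_ge0).
            rewrite Rabs_inv, (Rabs_right (rpow B (/p))) by lra.
            rewrite rpow_mul by (try apply rpow_ge0; left; apply Rinv_0_lt_compat; auto).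
            rewrite rpow_inv by auto. rewrite !rpow_mult by (try apply Rabs_pos; lra).
            replace ((q - 1) * p) with q by (unfold q; field; lra).
            replace (/ p * p) with 1 by (field; lra). rewrite rpow_1 by lra. field; lra.
      - rewrite rpow_one; lra. }
    pose proof (BB c Sg HS Hball) as Hb0.
    assert (Hb: Rabs (fsum n (fun j => c j * b j)) <= normT) by exact Hb0. rewrite Eval in Hb.
    rewrite Rabs_right in Hb by (apply Rle_ge, rpow_ge0).
    replace B with (rpow (rpow B (/q)) q) by (rewrite rpow_mult, Rinv_l, rpow_1; lra). apply rpow_le; [split; [apply rpow_ge0|auto]|lra].
  -
    set (c := fun j => sg (b j)).
    assert (Hball: inBall Inf (comb n c)).
    { simpl. split; [apply fin_supp_cv, comb_fin|]. intros i. rewrite comb_val'.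
      destruct (Nat.ltb i n); [unfold c; rewrite sg_abs; lra|rewrite Rabs_R0; lra]. }
    pose proof (BB c Sg HS Hball) as Hb0.
    assert (Hb: Rabs (fsum n (fun j => c j * b j)) <= normT) by exact Hb0.
    rewrite (fsum_ext n _ (fun j => Rabs (b j))) in Hb by (intros; apply sg_mul).
    unfold B. rewrite (fsum_ext n (fun i => rpow (Rabs (b i)) 1) (fun j => Rabs (b j)))
      by (intros; apply rpow_1, Rabs_pos).
    rewrite rpow_1 by auto. rewrite Rabs_right in Hb; auto. apply Rle_ge, fsum_ge0; intros; apply Rabs_pos.
Qed.
End DUAL.

Lemma conj_range e : exp_ge2 e -> 1 <= conj_exp e <= 2.
Proof.
  destruct e as [p|]; simpl; intros H; [|lra]. split.
  - apply Rmult_le_reg_r with (p-1); [lra|]. field_simplify; lra.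
  - apply Rmult_le_reg_r with (p-1); [lra|]. field_simplify; lra.
Qed.

Lemma khin_C_pos r C : khin_adm r C -> 0 < C.
Proof.
  intros HK. pose proof (khin_disc r C HK 1 (fun _ => 1)) as H. simpl in H.
  replace (0 + Rsqr (Rabs 1)) with 1 in H by (rewrite Rabs_R1; unfold Rsqr; ring).
  rewrite sqrt_1 in H.
  set (X := rpow ((rpow (Rabs (0 + 1 * 1)) r + rpow (Rabs (0 + 1 * -1)) r) / 2) (/ r)) in H.
  assert (0 <= X) by apply rpow_ge0.
  destruct (Rle_or_lt C 0); [|auto]. nra.
Qed.

Lemma main_C M e T normT C n :
  (3 <= M)%nat -> exp_ge2 e -> depends_on_first M T -> is_multilinear M e T ->
  is_lub (norm_set M e T) normT -> khin_adm (conj_exp e) C ->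
  lhs_trunc M e T n <= C ^ (M - 1) * normT.
Proof.
  intros HM He HD HML Hlub HK.
  pose proof (conj_range e He) as Hq. set (q := conj_exp e) in *.
  pose proof (khin_C_pos _ _ HK) as HC.
  assert (HN: 0 <= normT) by (eapply (normT_ge0 M e T n normT); eauto; lia).
  set (d := (M - 1)%nat).
  set (a := fun i1 (idx : nat -> nat) => T (fun k => match k with O => evec i1 | S k' => evec (idx k') end)).
  set (Phi := fun i1 => AvgM d n (fun Sg => rpow (Rabs (T (glue 1 (fun _ => evec i1) (fun k => xvec n (Sg k))))) q)).
  assert (Hi: forall i1, rpow (multi_sum d n (fun idx => Rsqr (Rabs (a i1 idx)))) (q/2)
                <= rpow (C ^ d) q * Phi i1).
  { intros i1. pose proof (multi_khin d n q C (a i1) Hq HK ltac:(lra)) as MK.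
    set (Y := multi_sum d n (fun idx => Rsqr (Rabs (a i1 idx)))) in *.
    assert (HY: 0 <= Y) by (apply multi_sum_ge0; intros; apply Rle_0_sqr).
    replace (rpow Y (q/2)) with (rpow (sqrt Y) q)
      by (rewrite <- rpow_sqrt, rpow_mult by auto; f_equal; field).
    assert (EPhi: AvgM d n (fun Sg => rpow (Rabs (multi_sum d n
        (fun idx => a i1 idx * fprod d (fun k => Sg k (S (idx k)))))) q) = Phi i1).
    { unfold Phi. apply AvgM_ext; intros Sg. f_equal. f_equal.
      rewrite (expand_multi M e T n HML HD d 1 (fun _ => evec i1) Sg) by (try (unfold d; lia); intros; apply evec_fin).
      apply multi_sum_ext; intros idx. f_equal. unfold a. f_equal.
      apply functional_extensionality; intros k. unfold glue. destruct k as [|k]; simpl; auto.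
      rewrite Nat.sub_0_r; auto. }
    rewrite EPhi in MK.
    assert (0 <= Phi i1) by (apply AvgM_ge0; intros; apply rpow_ge0).
    eapply Rle_trans; [apply rpow_le; [split; [apply sqrt_pos|exact MK]|lra]|].
    rewrite rpow_mul by (try apply pow_le; try apply rpow_ge0; lra).
    rewrite rpow_mult by auto. rewrite Rinv_l by lra. rewrite rpow_1 by auto. lra. }
  assert (Hsum: fsum n (fun i1 => Phi i1) <= rpow normT q).
  { unfold Phi. rewrite <- AvgM_fsum. rewrite <- (AvgM_const d n (rpow normT q)).
    apply AvgM_le_bnd. intros Sg HS. eapply (dual_bound M e T n normT); eauto; lia. }
  unfold lhs_trunc. cbv zeta. fold q.
  change (rpow (fsum n (fun i1 => rpow (multi_sum (M - 1) n (fun idx => Rsqr (Rabs (a i1 idx)))) (q / 2))) (/ q)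
    <= C ^ (M - 1) * normT).
  fold d.
  assert (HC': 0 <= C ^ d) by (apply pow_le; lra).
  replace (C ^ d * normT) with (rpow (rpow (C ^ d * normT) q) (/q)) by (apply rpow_id; [nra|lra]).
  apply rpow_le; [|left; apply Rinv_0_lt_compat; lra]. split.
  - apply fsum_ge0; intros; apply rpow_ge0.
  - apply Rle_trans with (fsum n (fun i1 => rpow (C ^ d) q * Phi i1)).
    + apply fsum_le; intros; apply Hi.
    + rewrite <- fsum_scal. rewrite rpow_mul by lra. apply Rmult_le_compat_l; [apply rpow_ge0|auto].
Qed.

Lemma pow_right_cont m A eps : 0 < eps -> exists B, A < B /\ B ^ m < A ^ m + eps.
Proof.
  intros He. pose proof (derivable_continuous_pt (fun y => y ^ m) A (derivable_pt_pow m A)) as H.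
  unfold continuity_pt, continue_in, limit1_in, limit_in in H.
  destruct (H eps ltac:(lra)) as [alp [Ha Hx]].
  exists (A + alp/2). split; [lra|].
  assert (Hd: D_x no_cond A (A + alp/2) /\ dist R_met (A + alp/2) A < alp).
  { split. split; [exact I|lra]. simpl. unfold R_dist. rewrite Rabs_right; lra. }
  specialize (Hx _ Hd). simpl in Hx. unfold R_dist in Hx.
  pose proof (Rle_abs ((A + alp / 2) ^ m - A ^ m)). lra.
Qed.

Theorem theorem4p1 (M : nat) (e : Exp) (T : (nat -> nat -> R) -> R) (normT A : R) :
  (3 <= M)%nat ->
  exp_ge2 e ->
  depends_on_first M T ->
  is_multilinear M e T ->
  is_lub (norm_set M e T) normT ->
  is_khinchin_const (conj_exp e) A ->
  forall n : nat, lhs_trunc M e T n <= A ^ (M - 1) * normT.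
Proof.
  intros HM He HD HML Hlub [H1 H2] n.
  assert (Hmain: forall C, khin_adm (conj_exp e) C -> lhs_trunc M e T n <= C ^ (M - 1) * normT)
    by (intros; apply main_C; auto).
  assert (HA: 0 <= A) by (apply H2; intros C HC; left; apply (khin_C_pos _ _ HC)).
  assert (HN: 0 <= normT) by (eapply (normT_ge0 M e T n normT); eauto; lia).
  assert (Hex: exists C, khin_adm (conj_exp e) C).
  { apply NNPP. intros Hno. assert (A + 1 <= A); [|lra].
    apply H2. intros C HC. exfalso; apply Hno; eauto. }
  destruct HN as [HN|HN].
  2:{ destruct Hex as [C HC]. rewrite <- HN in *. rewrite Rmult_0_r. specialize (Hmain C HC). lra. }
  apply Rnot_lt_le. intros Hlt.
  set (L := lhs_trunc M e T n) in *.
  destruct (pow_right_cont (M - 1) A ((L - A ^ (M-1) * normT) / normT)) as [B [HAB HB]].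
  { apply Rdiv_lt_0_compat; lra. }
  assert (HBL: B ^ (M - 1) * normT < L).
  { apply Rmult_lt_compat_r with (r := normT) in HB; auto.
    replace ((A ^ (M - 1) + (L - A ^ (M - 1) * normT) / normT) * normT) with L in HB by (field; lra). auto. }
  assert (Hc: exists C, khin_adm (conj_exp e) C /\ C < B).
  { apply NNPP. intros Hno. assert (B <= A); [|lra]. apply H2. intros C HC.
    apply Rnot_lt_le. intros HCB. apply Hno. eauto. }
  destruct Hc as [C [HC HCB]].
  pose proof (khin_C_pos _ _ HC).
  specialize (Hmain C HC). fold L in Hmain.
  assert (C ^ (M - 1) <= B ^ (M - 1)) by (apply pow_incr; lra).
  nra.
Qed.
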